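(* Let $a\in\mathbb{R}$ and let $\mathcal W_a=\bigoplus_{n\in\mathbb Z}\mathcal H\otimes L_n$ be the fractional Witt algebra described in the context. Then $\mathcal W_a$, endowed with the commutator bracket of operators on $V^a$, is closed under brackets, and for all $n,m\in\mathbb Z$: $$[L_n,L_m]=A_{n,m}(s)\otimes L_{n+m},$$ i.e. for $f(z)=\sum_k a_k z^{ak}$ one has $[L_n,L_m]f=\sum_k a_k A_{n,m}(k)\,L_{n+m}(z^{ak})$. More generally, for all $\phi,\psi\in\mathcal H$, $$[\phi\otimes L_n,\psi\otimes L_m]=\big(\psi(s+n)\phi(s)\Gamma_n(s)-\psi(s)\phi(s+m)\Gamma_m(s)\big)\otimes L_{m+n}.$$ Moreover, if $a\notin\mathbb Z$, then $A_{n,m}\in\mathcal H$.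
   Context: Fix $a\in\mathbb R$. For $p\in\mathbb Z$ define the meromorphic functions of $s\in\mathbb C$ $$\Gamma_p(s)=\frac{\Gamma(a(s+p)+1)}{\Gamma(a(s+p-1)+1)},\qquad A_{p,q}(s)=\Gamma_p(s)-\Gamma_q(s),$$ where $\Gamma$ is Euler's gamma function. Let $\mathcal F$ be the algebra of meromorphic functions on $\mathbb C$ that are holomorphic in a neighbourhood of every point whose real part is an integer. For $p,q\in\mathbb Z$ and $\phi,\psi\in\mathcal F$ put $[\phi,\psi]_{p,q}(s)=\psi(s+p)\phi(s)\Gamma_p(s)-\phi(s+q)\psi(s)\Gamma_q(s)$ if $p\neq q$ and $[\phi,\psi]_{p,p}=0$. Let $\mathcal H$ be the smallest subalgebra of $\mathcal F$ containing the constants $\mathbb C$ and closed under all the operations $[\cdot,\cdot]_{p,q}$, $p,q\in\mathbb Z$. Let $V^a=\mathbb C[[z^{-a},z^a]]$ be the space of formal series $\sum_{k\in\mathbb Z}p_kz^{ak}$ ($z^a$ a formal symbol). The fractional derivative is the linear operator with $(\partial/\partial z)^a(z^{ak})=\frac{\Gamma(ak+1)}{\Gamma(a(k-1)+1)}z^{a(k-1)}$, and $L_n=-z^{a(n+1)}(\partial/\partial z)^a$, so that $L_n(z^{ak})=-\Gamma_0(k)z^{a(k+n)}$. For $\phi\in\mathcal H$, the operator $\phi\otimes L_n$ acts on $V^a$ by $(\phi\otimes L_n)(z^{ak})=\phi(k)L_n(z^{ak})$, extended linearly. $\mathcal W_a=\bigoplus_{n\in\mathbb Z}\mathcal H\otimes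 L_n$ (an $\mathcal H$-module, graded by $n$), with bracket the commutator of operators on $V^a$. Coefficients are understood as values of the indicated meromorphic functions, and identities as identities of meromorphic functions of $s$. *)

(* Defs.v *)
From HB Require Import structures.
From mathcomp Require Import all_boot all_order all_algebra.
From mathcomp Require Import complex.
From mathcomp Require Import all_classical all_reals all_analysis.

Set Implicit Arguments.
Unset Strict Implicit.
Unset Printing Implicit Defensive.

Import Order.TTheory GRing.Theory Num.Theory numFieldNormedType.Exports.
Local Open Scope ring_scope.
Local Open Scope complex_scope.

Section FractionalWitt.
Variable R : realType.
Local Notation C := R[i].

Definition cnorm (z : C) : R := Num.sqrt (complex.Re z ^+ 2 + complex.Im z ^+ 2).

Definition cdiff (f : C -> C) (z : C) : Prop :=
  exists l : C, forall e : R, 0 < e -> exists d : R, 0 < d /\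
    forall w : C, 0 < cnorm (w - z) < d -> cnorm ((f w - f z) / (w - z) - l) < e.

Definition holo_near (f : C -> C) (z0 : C) : Prop :=
  exists r : R, 0 < r /\ forall z : C, cnorm (z - z0) < r -> cdiff f z.

(* f (a total function, whose values at poles are irrelevant) represents a
   meromorphic function on C: every point z0 is at worst a pole, i.e. f is
   holomorphic on a punctured disc around z0 and (z - z0)^k f(z) is bounded
   there for some k (so the singularity is removable or a pole of order <= k). *)
Definition meromorphic (f : C -> C) : Prop :=
  forall z0 : C, exists r : R, 0 < r /\
    (forall z : C, 0 < cnorm (z - z0) < r -> cdiff f z) /\
    exists (k : nat) (M : R), forall z : C, 0 < cnorm (z - z0) < r ->
      cnorm ((z - z0) ^+ k * f z) <= M.

Definition F_alg (f : C -> C) : Prop :=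
  meromorphic f /\
  forall z : C, (exists k : int, complex.Re z = k%:~R) -> holo_near f z.

Definition cpow (x : R) (z : C) : C :=
  (expR (complex.Re z * ln x))%:C *
  (cos (complex.Im z * ln x) +i* sin (complex.Im z * ln x)).

Definition gauss_seq (z : C) (n : nat) : C :=
  (n`!)%:R * cpow n%:R z / \prod_(i < n.+1) (z + i%:R).

(* Gamma z = lim_{n -> oo} n! n^z / (z (z+1) ... (z+n)); this is Euler's
   Gamma function for z not in {0,-1,-2,...} (junk value at the poles). *)
Definition Gamma (z : C) : C :=
  limn (fun n => complex.Re (gauss_seq z n)) +i*
  limn (fun n => complex.Im (gauss_seq z n)).

Definition Gam (a : R) (p : int) (s : C) : C :=
  Gamma (a%:C * (s + p%:~R) + 1) / Gamma (a%:C * (s + p%:~R - 1) + 1).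

Definition Afun (a : R) (p q : int) (s : C) : C := Gam a p s - Gam a q s.

Definition brk (a : R) (p q : int) (phi psi : C -> C) : C -> C :=
  if p == q then (fun _ => 0)
  else fun s => psi (s + p%:~R) * phi s * Gam a p s
                - phi (s + q%:~R) * psi s * Gam a q s.

(* H: the smallest subalgebra of F containing the constants and closed under
   all the brackets [.,.]_{p,q} (intersection of all such subalgebras). *)
Definition H_alg (a : R) (phi : C -> C) : Prop :=
  forall S : (C -> C) -> Prop,
    (forall f, S f -> F_alg f) ->
    (forall c : C, S (fun _ => c)) ->
    (forall f g, S f -> S g -> S (fun s => f s + g s)) ->
    (forall f g, S f -> S g -> S (fun s => f s * g s)) ->
    (forall (p q : int) f g, S f -> S g -> S (brk a p q f g)) ->
    S phi.

(* V^a = C[[z^-a, z^a]]: f = sum_k f(k) z^{ak}, coefficients indexed by Z *)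
Definition Va := int -> C.

(* fractional derivative: (d/dz)^a z^{ak} = G(ak+1)/G(a(k-1)+1) z^{a(k-1)} *)
Definition fracD (a : R) (f : Va) : Va :=
  fun j => Gamma (a%:C * (j + 1)%:~R + 1) / Gamma (a%:C * ((j + 1) - 1)%:~R + 1)
           * f (j + 1).

(* multiplication by z^{am} *)
Definition zmul (m : int) (f : Va) : Va := fun j => f (j - m).

Definition Lop (a : R) (n : int) (f : Va) : Va :=
  fun j => - zmul (n + 1) (fracD a f) j.

(* phi (x) L_n : z^{ak} |-> phi(k) L_n(z^{ak}), extended linearly *)
Definition tens (a : R) (phi : C -> C) (n : int) (f : Va) : Va :=
  Lop a n (fun k => phi k%:~R * f k).

Definition comm (T1 T2 : Va -> Va) : Va -> Va :=
  fun f j => T1 (T2 f) j - T2 (T1 f) j.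

Definition in_W (a : R) (T : Va -> Va) : Prop :=
  exists (N : nat) (ns : 'I_N -> int) (phis : 'I_N -> C -> C),
    (forall i, H_alg a (phis i)) /\
    T = fun f j => \sum_(i < N) tens a (phis i) (ns i) f j.

End FractionalWitt.

(* Main.v *)
Require Import Defs.
From HB Require Import structures.
From mathcomp Require Import all_boot all_order all_algebra.
From mathcomp Require Import complex.
From mathcomp Require Import all_classical all_reals all_analysis.
From mathcomp Require Import ring zify.
Import GRing.Theory Num.Theory.
Local Open Scope ring_scope.

Section S.
Variable R : realType.
Variable a : R.

Lemma GamS (p q : int) (s : R[i]) : Gam a p (s + q%:~R) = Gam a (p + q) s.
Proof. rewrite /Gam intrD. congr (Gamma (_ * _ + 1) / Gamma (_ * _ + 1)); ring. Qed.

Lemma tensE phi n (f : Va R) j :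
  tens a phi n f j = - (Gam a 0 (j - n)%:~R * (phi (j - n)%:~R * f (j - n))).
Proof.
rewrite /tens /Lop /zmul /fracD /Gam.
have -> : j - (n + 1) + 1 = j - n by ring.
by rewrite addr0 !intrB.
Qed.

Lemma ident3 (phi psi : R[i] -> R[i]) (n m : int) :
     comm (tens a phi n) (tens a psi m) =
     tens a (fun s => psi (s + n%:~R) * phi s * Gam a n s
                      - psi s * phi (s + m%:~R) * Gam a m s) (m + n).
Proof.
apply/funext => f; apply/funext => j.
rewrite /comm !tensE.
rewrite -(subrK (m + n) j).
move: (j - (m + n)) => k.
have -> : k + (m + n) - n - m = k by ring.
have -> : k + (m + n) - m - n = k by ring.
have -> : k + (m + n) - (m + n) = k by ring.
have -> : k + (m + n) - n = k + m by ring.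
have -> : k + (m + n) - m = k + n by ring.
rewrite !intrD -[Gam a 0 (_ + m%:~R)]/(Gam a 0 (_ + m%:~R)) !GamS !add0r.
ring.
Qed.

Lemma H_const c : H_alg a (fun _ => c).
Proof. by move=> S _ hc _ _ _; apply: hc. Qed.
Lemma H_add f g : H_alg a f -> H_alg a g -> H_alg a (fun s => f s + g s).
Proof. move=> hf hg S h1 h2 h3 h4 h5; apply: (h3); [exact: (hf S h1 h2 h3 h4 h5) | exact: (hg S h1 h2 h3 h4 h5)]. Qed.
Lemma H_mul f g : H_alg a f -> H_alg a g -> H_alg a (fun s => f s * g s).
Proof. move=> hf hg S h1 h2 h3 h4 h5; apply: (h4); [exact: (hf S h1 h2 h3 h4 h5) | exact: (hg S h1 h2 h3 h4 h5)]. Qed.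
Lemma H_brk p q f g : H_alg a f -> H_alg a g -> H_alg a (brk a p q f g).
Proof. move=> hf hg S h1 h2 h3 h4 h5; apply: (h5); [exact: (hf S h1 h2 h3 h4 h5) | exact: (hg S h1 h2 h3 h4 h5)]. Qed.
Lemma H_ext f g : (forall s, f s = g s) -> H_alg a f -> H_alg a g.
Proof. by move=> e; rewrite (funext e). Qed.
Lemma H_ext' f g : H_alg a f -> (forall s, f s = g s) -> H_alg a g.
Proof. by move=> h e; rewrite -(funext e). Qed.
Arguments H_ext' {f g}. Arguments H_brk p q {f g}. Arguments H_add {f g}. Arguments H_mul {f g}.

Lemma H_X phi psi p q : p != q -> H_alg a phi -> H_alg a psi ->
  H_alg a (fun s => brk a p q phi psi s + (-1) * brk a p q psi phi s).
Proof.
move=> _ h1 h2; apply: H_add; first exact: H_brk.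
apply: H_mul; [exact: H_const | exact: H_brk].
Qed.
Arguments H_X {phi psi p q}.

Lemma H_chi (phi psi : R[i] -> R[i]) (n m : int) : H_alg a phi -> H_alg a psi ->
  H_alg a (fun s => psi (s + n%:~R) * phi s * Gam a n s
                      - psi s * phi (s + m%:~R) * Gam a m s).
Proof.
move=> h1 h2.
have [<-|nm] := eqVneq n m; last first.
  apply: (H_ext' (H_brk n m h1 h2)) => s; rewrite /brk (negbTE nm); ring.
have d1 : n != n + 1 by apply/negP => /eqP; lia.
have d2 : n != n + 2 by apply/negP => /eqP; lia.
have d3 : n + 1 != n + 2 by apply/negP => /eqP; lia.
apply: (H_ext' (H_mul (H_const 2^-1) (H_add (H_add (H_X d1 h1 h2) (H_X d2 h1 h2))
                (H_mul (H_const (-1)) (H_X d3 h1 h2))))) => s; rewrite /brk (negbTE d1) (negbTE d2) (negbTE d3).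
by field.
Qed.

Lemma tens_sum phi n N (G : 'I_N -> Va R) j :
  tens a phi n (fun k => \sum_(i < N) G i k) j = \sum_(i < N) tens a phi n (G i) j.
Proof.
rewrite tensE mulr_sumr mulr_sumr -sumrN; apply: eq_bigr => i _; by rewrite tensE.
Qed.

Lemma in_W_tens phi n : H_alg a phi -> in_W a (tens a phi n).
Proof.
move=> h; exists 1%N, (fun _ => n), (fun _ => phi); split => //.
by apply/funext => f; apply/funext => j; rewrite big_ord1.
Qed.

Lemma in_W_0 : in_W a (fun _ _ => 0).
Proof.
exists 0%N, (fun _ => 0), (fun _ _ => 0); split => [i|]; first exact: H_const.
by apply/funext => f; apply/funext => j; rewrite big_ord0.
Qed.

Lemma in_W_add T1 T2 : in_W a T1 -> in_W a T2 -> in_W a (fun f j => T1 f j + T2 f j).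
Proof.
move=> [N1 [ns1 [ph1 [H1 ->]]]] [N2 [ns2 [ph2 [H2 ->]]]].
exists (N1 + N2)%N, (fun i => match fintype.split i with inl k => ns1 k | inr k => ns2 k end),
  (fun i => match fintype.split i with inl k => ph1 k | inr k => ph2 k end); split.
  by move=> i; case: (fintype.split i).
apply/funext => f; apply/funext => j; rewrite big_split_ord /=.
congr (_ + _); apply: eq_bigr => i _.
  by rewrite (unsplitK (inl i : 'I_N1 + 'I_N2)).
by rewrite (unsplitK (inr i : 'I_N1 + 'I_N2)).
Qed.

Lemma in_W_sum N (F : 'I_N -> Va R -> Va R) : (forall i, in_W a (F i)) ->
  in_W a (fun f j => \sum_(i < N) F i f j).
Proof.
elim: N F => [|N IH] F hF.
  have -> : (fun f j => \sum_(i < 0) F i f j) = (fun _ _ => 0).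
    by apply/funext => f; apply/funext => j; rewrite big_ord0.
  exact: in_W_0.
have -> : (fun f j => \sum_(i < N.+1) F i f j) =
   (fun f j => (fun f j => \sum_(i < N) F (widen_ord (leqnSn N) i) f j) f j + F ord_max f j).
  by apply/funext => f; apply/funext => j; rewrite big_ord_recr.
apply: in_W_add; last exact: hF.
exact: (IH (fun i => F (widen_ord (leqnSn N) i))).
Qed.

Lemma part1 (T1 T2 : Va R -> Va R) : in_W a T1 -> in_W a T2 -> in_W a (comm T1 T2).
Proof.
move=> [N1 [ns1 [ph1 [H1 ->]]]] [N2 [ns2 [ph2 [H2 ->]]]].
have -> : comm (fun f j => \sum_(i < N1) tens a (ph1 i) (ns1 i) f j)
               (fun f j => \sum_(i < N2) tens a (ph2 i) (ns2 i) f j) =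
   fun f j => \sum_(i < N1) (fun f j => \sum_(k < N2)
        comm (tens a (ph1 i) (ns1 i)) (tens a (ph2 k) (ns2 k)) f j) f j.
  apply/funext => f; apply/funext => j; rewrite /comm.
  under eq_bigr do rewrite tens_sum.
  under [X in _ - X]eq_bigr do rewrite tens_sum.
  rewrite [X in _ - X]exchange_big -sumrB; apply: eq_bigr => i _.
  by rewrite -sumrB.
apply: (in_W_sum _ (fun i f j => \sum_(k < N2)
        comm (tens a (ph1 i) (ns1 i)) (tens a (ph2 k) (ns2 k)) f j)) => i.
apply: (in_W_sum _ (fun k =>
        comm (tens a (ph1 i) (ns1 i)) (tens a (ph2 k) (ns2 k)))) => k.
rewrite ident3; apply: in_W_tens; exact: H_chi.
Qed.

Lemma main_sec :
  (forall T1 T2 : Va R -> Va R, in_W a T1 -> in_W a T2 -> in_W a (comm T1 T2)) /\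
  (forall n m : int, comm (Lop a n) (Lop a m) = tens a (Afun a n m) (n + m)) /\
  (forall (phi psi : R[i] -> R[i]) (n m : int), H_alg a phi -> H_alg a psi ->
     comm (tens a phi n) (tens a psi m) =
     tens a (fun s => psi (s + n%:~R) * phi s * Gam a n s
                      - psi s * phi (s + m%:~R) * Gam a m s) (m + n)) /\
  (~ (exists k : int, a = k%:~R) -> forall n m : int, H_alg a (Afun a n m)).
Proof.
split; first exact: part1.
split.
  move=> n m.
  have eL : forall p, Lop a p = tens a (fun _ => 1) p.
    move=> p; apply/funext => f; apply/funext => j.
    by rewrite /tens; congr (Lop a p _ j); apply/funext => k; rewrite mul1r.
  rewrite !eL ident3 addrC /Afun; congr (tens a _ _); apply/funext => s; ring.
split; first by move=> *; exact: ident3.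
move=> _ n m.
have [<-|nm] := eqVneq n m.
  apply: (H_ext' (H_const 0)) => s; by rewrite /Afun subrr.
apply: (H_ext' (H_brk n m (H_const 1) (H_const 1))) => s.
by rewrite /brk (negbTE nm) /Afun !mul1r.
Qed.

End S.

Theorem mainTheorem1 (R : realType) (a : R) :
  (forall T1 T2 : Va R -> Va R, in_W a T1 -> in_W a T2 -> in_W a (comm T1 T2)) /\
  (forall n m : int, comm (Lop a n) (Lop a m) = tens a (Afun a n m) (n + m)) /\
  (forall (phi psi : R[i] -> R[i]) (n m : int), H_alg a phi -> H_alg a psi ->
     comm (tens a phi n) (tens a psi m) =
     tens a (fun s => psi (s + n%:~R) * phi s * Gam a n s
                      - psi s * phi (s + m%:~R) * Gam a m s) (m + n)) /\
  (~ (exists k : int, a = k%:~R) -> forall n m : int, H_alg a (Afun a n m)).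
Proof. exact: main_sec. Qed.
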